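(* Let $\beta\in(0,1]$, $m\ge0$ an integer, and $\theta=(k_r)$ a lacunary sequence. If $\liminf_{r\to\infty}\frac{h_r^\beta}{k_r}>0$, then $S(F,\Delta^m)\subset S_\theta^\beta(F,\Delta^m)$ (with the same limit).
   Context: A fuzzy number is a map $X:\mathbb{R}\to[0,1]$ which is normal, fuzzy convex, upper semicontinuous, with compact closure of $\{t:X(t)>0\}$; $L(\mathbb{R})$ is the set of fuzzy numbers. Level sets $[X]^\alpha=\{t:X(t)\ge\alpha\}$ ($\alpha\in(0,1]$), $[X]^0=\overline{\{t:X(t)>0\}}$, are compact intervals $[u^\alpha,v^\alpha]$. Subtraction: $[X-Y]^\alpha=[u_1^\alpha-v_2^\alpha,v_1^\alpha-u_2^\alpha]$. Metric: $d(X,Y)=\sup_{\alpha\in[0,1]}\max\{|u_1^\alpha-u_2^\alpha|,|v_1^\alpha-v_2^\alpha|\}$. $(\Delta^0X)_k=X_k$, $(\Delta^1X)_k=X_k-X_{k+1}$, $(\Delta^mX)_k=(\Delta^1(\Delta^{m-1}X))_k$. A lacunary sequence is an increasing integer sequence $\theta=(k_r)_{r\ge0}$ with $k_0=0$, $h_r=k_r-k_{r-1}\to\infty$; $I_r=(k_{r-1},k_r]$. $S_\theta^\beta(F,\Delta^m)$: sequences $X$ with some $X_0\in L(\mathbb{R})$ (the limit) such that for all $\varepsilon>0$, $\lim_r\frac{1}{h_r^\beta}|\{k\in I_r:d(\Delta^mX_k,X_0)\ge\varepsilon\}|=0$. $S(F,\Delta^m)$: sequences $X$ with some $X_0\in L(\mathbb{R})$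 (the limit) such that for all $\varepsilon>0$, $\lim_{n\to\infty}\frac{1}{n}|\{k\le n:d(\Delta^mX_k,X_0)\ge\varepsilon\}|=0$. *)

(* Defs.v *)
From HB Require Import structures.
From mathcomp Require Import all_boot all_order all_algebra.
From mathcomp Require Import all_classical all_reals all_analysis.
Set Implicit Arguments. Unset Strict Implicit. Unset Printing Implicit Defensive.
Import Order.TTheory GRing.Theory Num.Theory.
Import numFieldNormedType.Exports.
Local Open Scope classical_set_scope.
Local Open Scope ring_scope.

Section Fuzzy.
Variable R : realType.

Definition is_fuzzy_number (X : R -> R) : Prop :=
  [/\ (forall t, 0 <= X t <= 1),
      (exists t, X t = 1),
      (forall s t l, 0 <= l <= 1 -> Num.min (X s) (X t) <= X (l * s + (1 - l) * t)),
      (forall t (e : R), 0 < e -> \forall s \near t, X s < X t + e) &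
      compact (closure [set t | 0 < X t])].

Definition levelset (X : R -> R) (a : R) : set R :=
  if a == 0 then closure [set t | 0 < X t] else [set t | a <= X t].

(* endpoints u^a and v^a of [X]^a = [u^a, v^a] *)
Definition lev_lo (X : R -> R) (a : R) : R := inf (levelset X a).
Definition lev_hi (X : R -> R) (a : R) : R := sup (levelset X a).

(* subtraction: the fuzzy number whose a-level set is
   [u1^a - v2^a, v1^a - u2^a] (membership = sup of levels containing t) *)
Definition fsub (X Y : R -> R) : R -> R := fun t =>
  sup [set a | 0 <= a <= 1 /\
               lev_lo X a - lev_hi Y a <= t <= lev_hi X a - lev_lo Y a].

Definition fdist (X Y : R -> R) : R :=
  sup [set Num.max `|lev_lo X a - lev_lo Y a| `|lev_hi X a - lev_hi Y a|
      | a in `[0, 1]].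

Fixpoint fdelta (m : nat) (X : nat -> R -> R) : nat -> R -> R :=
  match m with
  | 0 => X
  | m'.+1 => fun k => fsub (fdelta m' X k) (fdelta m' X k.+1)
  end.

Definition stat_conv (m : nat) (X : nat -> R -> R) (X0 : R -> R) : Prop :=
  forall e : R, 0 < e ->
    (fun n : nat => (count (fun k => e <= fdist (fdelta m X k) X0)
                           (iota 1 n))%:R / n%:R) @ \oo --> (0 : R).

End Fuzzy.

Definition hr (theta : nat -> nat) (r : nat) : nat := theta r - theta r.-1.

Definition lacunary (theta : nat -> nat) : Prop :=
  [/\ theta 0 = 0%N,
      (forall r, theta r < theta r.+1)%N &
      (forall M : nat, exists N : nat, forall r, (N <= r -> M <= hr theta r)%N)].

Section Lac.
Variable R : realType.
(* lacunary beta-statistical Delta^m-convergence to X0;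
   I_r = (k_{r-1}, k_r] *)
Definition lac_stat_conv (beta : R) (theta : nat -> nat) (m : nat)
    (X : nat -> R -> R) (X0 : R -> R) : Prop :=
  forall e : R, 0 < e ->
    (fun r : nat =>
       (count (fun k => e <= fdist (fdelta m X k) X0)
              (iota (theta r.-1).+1 (hr theta r)))%:R
       / ((hr theta r)%:R `^ beta)) @ \oo --> (0 : R).
End Lac.

(* Main.v *)
Require Import Defs.
From HB Require Import structures.
From mathcomp Require Import all_boot all_order all_algebra.
From mathcomp Require Import all_classical all_reals all_analysis.
Import Order.TTheory GRing.Theory Num.Theory.
Import numFieldNormedType.Exports.
Local Open Scope classical_set_scope.
Local Open Scope ring_scope.

Lemma liminf_pos_aux (R : realType) (u : nat -> R) :
  (0 < limn_einf (fun r => (u r)%:E))%E ->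
  exists c : R, 0 < c /\ exists N, forall r, (N <= r)%N -> c <= u r.
Proof.
rewrite limn_einf_lim.
have -> : limn (einfs (fun r => (u r)%:E)) =
   ereal_sup (range (einfs (fun r => (u r)%:E))).
  by apply/cvg_lim => //; exact: cvg_einfs_sup.
set S := ereal_sup _ => HS.
have [c [c0 cS]] : exists c : R, 0 < c /\ (c%:E < S)%E.
  move: HS; case: S => [s||] //.
  - rewrite lte_fin => s0; exists (s / 2); split; first by rewrite divr_gt0.
    by rewrite lte_fin ltr_pdivrMr // ltr_pMr // ltr1n.
  - by move=> _; exists 1; split => //; rewrite ltey.
case/ereal_sup_gt: cS => _ [N _ <-] cN.
exists c; split => //; exists N => r Nr.
rewrite -lee_fin; apply: (ltW (lt_le_trans cN _)).
by apply: ereal_inf_lbound; exists r.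
Qed.

Theorem theorem2p10 (R : realType) (beta : R) (m : nat) (theta : nat -> nat)
  (X : nat -> R -> R) (X0 : R -> R) :
  0 < beta <= 1 ->
  lacunary theta ->
  (0 < limn_einf (fun r : nat =>
          (((hr theta r)%:R `^ beta) / (theta r)%:R)%:E))%E ->
  (forall k, is_fuzzy_number (X k)) ->
  is_fuzzy_number X0 ->
  stat_conv m X X0 ->
  lac_stat_conv beta theta m X X0.
Proof.
move=> /andP[b0 b1] [t0 tinc thy] hlim _ _ hs e e0.
have [c [c0 [N hN]]] := @liminf_pos_aux R _ hlim.
have tr : forall r, (r <= theta r)%N.
  elim => [|r IH] //; exact: leq_ltn_trans IH (tinc r).
have hpos : forall r, (0 < r)%N -> (0 < hr theta r)%N.
  by case => [|r] // _; rewrite /hr subn_gt0 tinc.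
set P := (fun k => e <= fdist (fdelta m X k) X0).
set a := fun n : nat => (count P (iota 1 n))%:R / (n%:R : R).
have ha : a \o theta @ \oo --> (0 : R).
  apply: cvg_comp (hs e e0).
  move=> A [M _ HM]; exists M => // r /= Mr; apply: HM => /=.
  exact: leq_trans Mr (tr r).
have hc : (fun r => a (theta r) * c^-1) @ \oo --> (0 : R).
  by rewrite -(mul0r c^-1); apply: cvgMr_tmp.
apply: (squeeze_cvgr _ (cvg_cst 0) hc).
near=> r.
have r1 : (0 < r)%N by near: r; exists 1%N.
have Nr : (N <= r)%N by near: r; exists N.
have hr0 := hpos r r1.
have k0 : (0 < theta r)%N by apply: leq_trans r1 (tr r).
have p0 : 0 < (hr theta r)%:R `^ beta by apply: powR_gt0; rewrite ltr0n.
apply/andP; split.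
  by apply: divr_ge0 => //; apply: powR_ge0.
have Hcount : (count P (iota (theta r.-1).+1 (hr theta r)) <= count P (iota 1 (theta r)))%N.
  have -> : theta r = (theta r.-1 + hr theta r)%N.
    rewrite /hr subnKC //; case: (r) r1 => [|r'] // _ /=; exact: ltnW (tinc r').
  by rewrite iotaD count_cat add1n leq_addl.
have := hN r Nr.
set p := (hr theta r)%:R `^ beta => hc'.
rewrite /a.
set C1 := (count P _)%:R; set C := (count P _)%:R.
have C1C : C1 <= C by rewrite ler_nat.
have C0 : 0 <= C1 by [].
have kR : 0 < (theta r)%:R :> R by rewrite ltr0n.
have ckp : c * (theta r)%:R <= p by rewrite -ler_pdivlMr.
apply: (@le_trans _ _ (C / p)).
  by apply: ler_wpM2r => //; rewrite invr_ge0 ltW.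
rewrite -mulrA -invfM; apply: ler_wpM2l => //.
rewrite lef_pV2 ?posrE ?mulr_gt0 //; by rewrite mulrC.
Unshelve. all: end_near.
Qed.
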